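(* Let $f:\mathbb{R}^n\to\mathbb{R}$ be differentiable and pseudo-convex, with $\nabla f$ $L$-Lipschitz continuous ($L>0$), and assume the stationary set $X^*$ is non-empty. Let $0<h<\frac{1}{L}$ and $\beta\in\left(\frac{1-\sqrt{1-h^2L^2}}{h^2L^2},1\right]$, and let $\{x^k\},\{z^k\}$ be generated by Algorithm 1 from an arbitrary $x^0\in\mathbb{R}^n$. Then for every $x^*\in X^*$ and every $k\ge 0$, $$\|x^{k+1}-x^*\|^2\le \|x^k-x^*\|^2-\kappa_1\|x^k-z^k\|^2,$$ where $\kappa_1=2\beta-1-\beta^2h^2L^2>0$.
   Context: A differentiable $f$ is pseudo-convex if $\nabla f$ is pseudo-monotone, i.e. for all $x,y$, $\langle \nabla f(x),y-x\rangle\ge 0$ implies $\langle \nabla f(y),y-x\rangle\ge0$. The stationary set is $X^*=\{x\in\mathbb{R}^n:\nabla f(x)=0\}$. Algorithm 1: given $x^0$, for $k=0,1,2,\dots$ set $z^k=x^k-h\nabla f(x^k)$ and $x^{k+1}=x^k-h\big(\nabla f(x^k)-\beta(\nabla f(x^k)-\nabla f(z^k))\big)$. *)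

(* Defs.v *)
From HB Require Import structures.
From mathcomp Require Import all_boot all_order all_algebra.
From mathcomp Require Import all_classical all_reals all_analysis.
Set Implicit Arguments. Unset Strict Implicit. Unset Printing Implicit Defensive.
Import Order.TTheory GRing.Theory Num.Theory.
Import numFieldNormedType.Exports.
Local Open Scope ring_scope.

Definition dotp {R : realType} {n : nat} (u v : 'rV[R]_n) : R :=
  \sum_(i < n) u 0 i * v 0 i.
Definition enorm {R : realType} {n : nat} (u : 'rV[R]_n) : R :=
  Num.sqrt (dotp u u).

Definition is_gradient {R : realType} {n : nat}
  (f : 'rV[R]_n -> R) (g : 'rV[R]_n -> 'rV[R]_n) : Prop :=
  forall x, differentiable f x /\ forall v, 'd f x v = dotp (g x) v.

Definition pseudo_monotone {R : realType} {n : nat} (g : 'rV[R]_n -> 'rV[R]_n) : Prop :=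
  forall x y, 0 <= dotp (g x) (y - x) -> 0 <= dotp (g y) (y - x).

Definition pseudo_convex {R : realType} {n : nat}
  (f : 'rV[R]_n -> R) (g : 'rV[R]_n -> 'rV[R]_n) : Prop :=
  is_gradient f g /\ pseudo_monotone g.

Definition lipschitz_with {R : realType} {n : nat} (L : R) (g : 'rV[R]_n -> 'rV[R]_n) : Prop :=
  forall x y, enorm (g x - g y) <= L * enorm (x - y).

Definition stationary_set {R : realType} {n : nat} (g : 'rV[R]_n -> 'rV[R]_n) : set 'rV[R]_n :=
  [set x | g x = 0].

Definition alg1_z {R : realType} {n : nat} (g : 'rV[R]_n -> 'rV[R]_n) (h : R)
  (x : 'rV[R]_n) : 'rV[R]_n := x - h *: g x.

Fixpoint alg1_x {R : realType} {n : nat} (g : 'rV[R]_n -> 'rV[R]_n) (h beta : R)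
  (x0 : 'rV[R]_n) (k : nat) : 'rV[R]_n :=
  match k with
  | O => x0
  | S k' => let xk := alg1_x g h beta x0 k' in
            xk - h *: (g xk - beta *: (g xk - g (alg1_z g h xk)))
  end.

(* Main.v *)
Require Import Defs.
From HB Require Import structures.
From mathcomp Require Import all_boot all_order all_algebra.
From mathcomp Require Import all_classical all_reals all_analysis.
From mathcomp Require Import ring lra.
Import Order.TTheory GRing.Theory Num.Theory.
Local Open Scope ring_scope.
Local Open Scope classical_set_scope.

Section Dot.
Variables (R : realType) (n : nat).
Implicit Types u v w : 'rV[R]_n.

Lemma dotpC u v : dotp u v = dotp v u.
Proof. by apply: eq_bigr => i _; rewrite mulrC. Qed.

Lemma dotpDl u v w : dotp (u + v) w = dotp u w + dotp v w.
Proof. by rewrite /dotp -big_split; apply: eq_bigr => i _; rewrite !mxE mulrDl. Qed.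

Lemma dotpBl u v w : dotp (u - v) w = dotp u w - dotp v w.
Proof.
by rewrite /dotp -sumrB; apply: eq_bigr => i _; rewrite !mxE mulrBl.
Qed.

Lemma dotpZl (a : R) u w : dotp (a *: u) w = a * dotp u w.
Proof. rewrite /dotp mulr_sumr; apply: eq_bigr => i _; by rewrite !mxE mulrA. Qed.

Lemma dotpDr u v w : dotp w (u + v) = dotp w u + dotp w v.
Proof. by rewrite dotpC dotpDl !(dotpC w). Qed.
Lemma dotpBr u v w : dotp w (u - v) = dotp w u - dotp w v.
Proof. by rewrite dotpC dotpBl !(dotpC w). Qed.
Lemma dotpZr (a : R) u w : dotp w (a *: u) = a * dotp w u.
Proof. by rewrite dotpC dotpZl dotpC. Qed.

Lemma dotp_ge0 u : 0 <= dotp u u.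
Proof. by apply: sumr_ge0 => i _; rewrite -expr2 sqr_ge0. Qed.

Lemma enorm2 u : enorm u ^+ 2 = dotp u u.
Proof. by rewrite /enorm sqr_sqrtr // dotp_ge0. Qed.

Lemma enorm_ge0 u : 0 <= enorm u.
Proof. exact: sqrtr_ge0. Qed.
End Dot.

Theorem proposition1 (R : realType) (n : nat) (f : 'rV[R]_n -> R)
  (g : 'rV[R]_n -> 'rV[R]_n) (L h beta : R) (x0 : 'rV[R]_n) :
  pseudo_convex f g ->
  0 < L -> lipschitz_with L g ->
  stationary_set g !=set0 ->
  0 < h -> h < L^-1 ->
  (1 - Num.sqrt (1 - h ^+ 2 * L ^+ 2)) / (h ^+ 2 * L ^+ 2) < beta -> beta <= 1 ->
  let kappa1 := 2 * beta - 1 - beta ^+ 2 * h ^+ 2 * L ^+ 2 in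
  0 < kappa1 /\
  forall xs, xs \in stationary_set g -> forall k : nat,
    enorm (alg1_x g h beta x0 k.+1 - xs) ^+ 2
    <= enorm (alg1_x g h beta x0 k - xs) ^+ 2
       - kappa1 * enorm (alg1_x g h beta x0 k - alg1_z g h (alg1_x g h beta x0 k)) ^+ 2.
Proof.
move=> [_ Hpm] L0 Hlip _ h0 hL Hb b1 kappa1.
have hL1 : h * L < 1 by rewrite -(mulVf (lt0r_neq0 L0)) ltr_pM2r.
set c := h ^+ 2 * L ^+ 2.
have c0 : 0 < c by rewrite /c mulr_gt0 // exprn_gt0.
have c1 : c < 1.
  rewrite /c -exprMn expr_lt1 //; by rewrite mulr_ge0 // ltW.
set s := Num.sqrt (1 - c).
have s0 : 0 <= s by exact: sqrtr_ge0.
have s2 : s ^+ 2 = 1 - c by rewrite /s sqr_sqrtr // subr_ge0 ltW.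
have s1 : s <= 1 by nra.
have b0 : 0 <= beta.
  apply: ltW; apply: le_lt_trans Hb; rewrite divr_ge0 // ?subr_ge0 //; last exact: ltW.
split.
  have H1 : 0 < c * beta - 1 + s.
    move: Hb; rewrite ltr_pdivrMr // => Hb.
    have Hb' : 1 - s < beta * c by exact: Hb.
    lra.
  have H2 : 0 < 1 + s - c * beta.
    have : c * beta <= c by rewrite ler_piMr // ltW.
    lra.
  have H3 : 0 < (c * beta - 1 + s) * (1 + s - c * beta) by rewrite mulr_gt0.
  have E : (c * beta - 1 + s) * (1 + s - c * beta) = c * kappa1.
    rewrite /kappa1 -/c; have -> : (c * beta - 1 + s) * (1 + s - c * beta)
       = s ^+ 2 - (c * beta - 1) ^+ 2 by ring.
    rewrite s2 /c; ring.
  by move: H3; rewrite E pmulr_rgt0.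
move=> xs; rewrite inE /stationary_set /= => gxs k.
set x := alg1_x g h beta x0 k.
rewrite /= -/x /alg1_z.
set a := g x; set b := g (x - h *: a); set p := x - xs.
have Ey : x - h *: (a - beta *: (a - b)) - xs
   = p - (h * (1 - beta)) *: a - (h * beta) *: b.
  by rewrite /p; apply/rowP => i; rewrite !mxE; ring.
have Ez : x - (x - h *: a) = h *: a.
  by apply/rowP => i; rewrite !mxE; ring.
have D1 : 0 <= dotp a p.
  apply: Hpm; by rewrite gxs /dotp big1 // => i _; rewrite mxE mul0r.
have D2 : 0 <= dotp b (p - h *: a).
  have -> : p - h *: a = (x - h *: a) - xs by apply/rowP => i; rewrite !mxE; ring.
  apply: Hpm; by rewrite gxs /dotp big1 // => i _; rewrite mxE mul0r.
have Lip : dotp (a - b) (a - b) <= L ^+ 2 * (h ^+ 2 * dotp a a).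
  have H := Hlip x (x - h *: a); rewrite -/a -/b Ez in H.
  have : enorm (a - b) ^+ 2 <= (L * enorm (h *: a)) ^+ 2.
    by rewrite ler_pXn2r // ?nnegrE ?enorm_ge0 // mulr_ge0 ?enorm_ge0 // ltW.
  by rewrite exprMn !enorm2 dotpZl dotpZr mulrA -expr2.
clearbody p.
rewrite Ey Ez !enorm2 dotpZl dotpZr.
move: D2 Lip; rewrite !(dotpBl, dotpBr, dotpZl, dotpZr) ?(dotpC _ _ b a) ?(dotpC _ _ p a) ?(dotpC _ _ p b).
move=> D2 Lip.
set aa := dotp a a in Lip *; set ab := dotp a b in D2 Lip *; set bb := dotp b b in Lip *.
set ap := dotp a p in D1 *; set bp := dotp b p in D2 *; set pp := dotp p p.
have P1 : 0 <= 2 * h * (1 - beta) * ap.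
  apply: mulr_ge0 => //; apply: mulr_ge0; [apply: mulr_ge0 => //; exact: ltW | lra].
have P2 : 0 <= 2 * h * beta * (bp - h * ab).
  apply: mulr_ge0 => //; apply: mulr_ge0 => //; apply: mulr_ge0 => //; exact: ltW.
have P3 : h ^+ 2 * beta ^+ 2 * (aa - ab - ab + bb) <= h ^+ 2 * beta ^+ 2 * (L ^+ 2 * (h ^+ 2 * aa)).
  apply: ler_wpM2l; first by rewrite mulr_ge0 // sqr_ge0.
  move: Lip; congr (_ <= _); ring.
rewrite /kappa1.
lra.
Qed.
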